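(* Let $(\mathcal G_A,p^A)$ and $(\mathcal G_B,p^B)$ be CPS's on the finite set $\Omega$ (satisfying the standing assumptions), each of which satisfies certainty reflection and is $1$-closed. Fix an event $E\subseteq\Omega$, a state $\omega\in\Omega$, and numbers $q_A,q_B\in[0,1]$. If $\omega\in C^\infty$ (i.e., it is common certainty at $\omega$ that Alice assigns probability $q_A$ to $E$ and Bob assigns probability $q_B$ to $E$) and local consistency holds at $\omega$, then $q_A=q_B$.
   Context: $\Omega$ is a finite set; every subset of $\Omega$ is an event. A conditional probability space (CPS) is a pair $(\mathcal G,p)$ where $\mathcal G$ is a family of nonempty subsets of $\Omega$ and $p$ assigns to each $G\in\mathcal G$ a probability measure $p_G$ on $\Omega$ such that (i) $p_G(G)=1$ for all $G\in\mathcal G$, and (ii) $p_G(E)=p_G(F)\,p_F(E)$ whenever $E\subseteq F\subseteq G$, $E\subseteq\Omega$, $F,G\in\mathcal G$. Standing assumption: every conditioning family $\mathcal G$ is closed under unions and under nonempty intersections (if $G,H\in\mathcal G$ then $G\cup H\in\mathcal G$, and $G\cap H\in\mathcal G$ whenever $G\cap H\neq\emptyset$) and covers $\Omega$ (every $\omega$ lies in some member). For a CPS $(\mathcal G_i,p^i)$ and $\omega\in\Omega$, the atom $m_i(\omega)=\bigcap\{G\in\mathcal G_i:\omega\in G\}$; it is nonempty and belongs to $\mathcal G_i$. The CPS $(\mathcal G_i,p^i)$ is $1$-closed if every $L\subseteq\Omega$ such that $L\subseteq G$ and $p^i_G(L)=1$ for some $G\in\mathcal G_i$ belongs to $\mathcal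 G_i$. It satisfies certainty reflection if for every event $E$, every $q\in[0,1]$ and every $\omega$: $p^i_{m_i(\omega)}(E)=q$ implies $p^i_{m_i(\omega)}(\{\omega'\in\Omega: p^i_{m_i(\omega')}(E)=q\})=1$. For agents $i=A,B$ and an event $F$, $C_i(F)=\{\omega: p^i_{m_i(\omega)}(F)=1\}$. Given $E$ and $q_A,q_B$, define $A^0=\{\omega:p^A_{m_A(\omega)}(E)=q_A\}$, $B^0=\{\omega:p^B_{m_B(\omega)}(E)=q_B\}$, $A^{n+1}=A^n\cap C_A(B^n)$, $B^{n+1}=B^n\cap C_B(A^n)$ for $n\ge0$, and $C^\infty=\bigcap_{n\ge0}A^n\cap\bigcap_{n\ge0}B^n$. Let $m(\omega)$ denote the intersection of all members of $\mathcal G_A\cap\mathcal G_B$ containing $\omega$ (note $\Omega\in\mathcal G_A\cap\mathcal G_B$). Local consistency holds at $\omega$ if $p^A_{m(\omega)}=p^B_{m(\omega)}$. *)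

(* Defs.v *)
(* Omega is a finite type T; probabilities take values in a
   real field R. A probability measure on T is given by its point masses. *)
From HB Require Import structures.
From mathcomp Require Import all_boot all_order all_algebra.
Set Implicit Arguments. Unset Strict Implicit. Unset Printing Implicit Defensive.
Import Order.TTheory GRing.Theory Num.Theory.
Local Open Scope ring_scope.

Section CPS.
Variables (T : finType) (R : realFieldType).

Definition Pr (mu : {ffun T -> R}) (E : {set T}) : R := \sum_(x in E) mu x.

Definition is_prob (mu : {ffun T -> R}) : Prop :=
  (forall x, 0 <= mu x) /\ \sum_x mu x = 1.

(* A conditional probability space (Gs, p): p G is the measure p_G,
   meaningful only for G \in Gs. *)
Definition is_CPS (Gs : {set {set T}}) (p : {set T} -> {ffun T -> R}) : Prop :=
  [/\ (forall G, G \in Gs -> G != set0),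
      (forall G, G \in Gs -> is_prob (p G)),
      (forall G, G \in Gs -> Pr (p G) G = 1) &
      (forall (E F G : {set T}), F \in Gs -> G \in Gs ->
          E \subset F -> F \subset G -> Pr (p G) E = Pr (p G) F * Pr (p F) E)].

Definition standing (Gs : {set {set T}}) : Prop :=
  [/\ (forall G H, G \in Gs -> H \in Gs -> G :|: H \in Gs),
      (forall G H, G \in Gs -> H \in Gs -> G :&: H != set0 -> G :&: H \in Gs) &
      (forall w : T, exists2 G, G \in Gs & w \in G)].

Definition atom (Gs : {set {set T}}) (w : T) : {set T} :=
  \bigcap_(G in Gs | w \in G) G.

Definition one_closed (Gs : {set {set T}}) (p : {set T} -> {ffun T -> R}) : Prop :=
  forall (L G : {set T}), G \in Gs -> L \subset G -> Pr (p G) L = 1 -> L \in Gs.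

Definition certainty_reflection (Gs : {set {set T}})
    (p : {set T} -> {ffun T -> R}) : Prop :=
  forall (E : {set T}) (q : R) (w : T), 0 <= q <= 1 ->
    Pr (p (atom Gs w)) E = q ->
    Pr (p (atom Gs w)) [set w' | Pr (p (atom Gs w')) E == q] = 1.

Definition Cert (Gs : {set {set T}}) (p : {set T} -> {ffun T -> R})
    (F : {set T}) : {set T} :=
  [set w | Pr (p (atom Gs w)) F == 1].

Section Iter.
Variables (GA GB : {set {set T}}) (pA pB : {set T} -> {ffun T -> R})
          (E : {set T}) (qA qB : R).

Fixpoint AB (n : nat) : {set T} * {set T} :=
  match n with
  | 0 => ([set w | Pr (pA (atom GA w)) E == qA],
          [set w | Pr (pB (atom GB w)) E == qB])
  | n'.+1 => let: (An, Bn) := AB n' in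
             (An :&: Cert GA pA Bn, Bn :&: Cert GB pB An)
  end.

Definition in_Cinf (w : T) : Prop :=
  forall n, w \in (AB n).1 /\ w \in (AB n).2.
End Iter.

Definition meet_atom (GA GB : {set {set T}}) (w : T) : {set T} :=
  \bigcap_(G in GA :&: GB | w \in G) G.

Definition local_consistency (GA GB : {set {set T}})
    (pA pB : {set T} -> {ffun T -> R}) (w : T) : Prop :=
  pA (meet_atom GA GB w) = pB (meet_atom GA GB w).

End CPS.

(* Main.v *)
Require Import Defs.
From HB Require Import structures.
From mathcomp Require Import all_boot all_order all_algebra.
From Stdlib Require Import ClassicalEpsilon.
Import Order.TTheory GRing.Theory Num.Theory.
Local Open Scope ring_scope.
Set Implicit Arguments. Unset Strict Implicit.

Section Helpers.
Variables (T : finType) (R : realFieldType).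
Implicit Types (mu : {ffun T -> R}) (X Y G S : {set T}).

Lemma Pr_split mu X Y : Pr mu X = Pr mu (X :&: Y) + Pr mu (X :\: Y).
Proof. by rewrite /Pr (big_setID Y). Qed.

Lemma Pr_ge0 mu X : is_prob mu -> 0 <= Pr mu X.
Proof. by case=> h _; apply: sumr_ge0 => x _; apply: h. Qed.

Lemma Pr_total mu X : is_prob mu -> Pr mu X + Pr mu (~: X) = 1.
Proof.
case=> _ h1; rewrite -h1.
have -> : \sum_x mu x = Pr mu setT by apply: eq_bigl => x; rewrite inE.
rewrite (Pr_split mu setT X).
by rewrite setTI setTD.
Qed.

Lemma mem_of_Pr1 mu X u : is_prob mu -> Pr mu X = 1 -> 0 < mu u -> u \in X.
Proof.
move=> hp h1 pu; case: (boolP (u \in X)) => // uX.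
have ht := Pr_total X hp; rewrite h1 in ht.
have h0 : Pr mu (~: X) = 0 by apply: (addrI 1); rewrite addr0.
have : mu u <= Pr mu (~: X).
  rewrite /Pr (bigD1 u) ?inE //= lerDl; apply: sumr_ge0 => x _; exact: hp.1.
by rewrite h0 leNgt pu.
Qed.

Lemma zero_out mu G x : is_prob mu -> Pr mu G = 1 -> x \notin G -> mu x = 0.
Proof.
move=> hp h1 xG; apply/eqP; rewrite eq_le hp.1 andbT leNgt; apply/negP.
by move/(mem_of_Pr1 hp h1); rewrite (negbTE xG).
Qed.

Lemma Pr_restrict mu G X : is_prob mu -> Pr mu G = 1 -> Pr mu X = Pr mu (X :&: G).
Proof.
move=> hp h1; rewrite (Pr_split mu X G) [Pr mu (X :\: G)]big1 ?addr0 //.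
by move=> x; rewrite inE => /andP[xG _]; exact: zero_out hp h1 xG.
Qed.

Lemma Pr_mono1 mu G X : is_prob mu -> Pr mu G = 1 -> G \subset X -> Pr mu X = 1.
Proof. by move=> hp h1 GX; rewrite (Pr_restrict X hp h1) (setIidPr GX). Qed.

Lemma Pr_supp mu G S : is_prob mu -> Pr mu G = 1 -> S \subset G ->
  (forall x, x \in G -> x \notin S -> mu x = 0) -> Pr mu S = 1.
Proof.
move=> hp h1 SG hz; rewrite -h1 (Pr_split mu G S) (setIidPr SG).
rewrite [Pr mu (G :\: S)]big1 ?addr0 // => x; rewrite inE => /andP[xS xG].
exact: hz.
Qed.

Lemma atom_in (Gs : {set {set T}}) y :
  (forall G H, G \in Gs -> H \in Gs -> G :&: H != set0 -> G :&: H \in Gs) ->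
  (exists2 G, G \in Gs & y \in G) -> atom Gs y \in Gs /\ y \in atom Gs y.
Proof.
move=> HI [G0 G0s yG0].
have yin : y \in atom Gs y by apply/bigcapP => G /andP[_ ->].
split => //.
have sub : atom Gs y \subset G0 by apply: bigcap_inf; rewrite G0s yG0.
pose P (X : {set T}) := (X == setT) || ((X \in Gs) && (y \in X)).
have : P (atom Gs y).
  rewrite /atom; apply: (big_ind P).
  - by rewrite /P eqxx.
  - move=> X Y /orP[/eqP-> | /andP[XG yX]] /orP[/eqP-> | /andP[YG yY]];
      rewrite /P ?setTI ?setIT ?eqxx ?XG ?YG ?yX ?yY ?orbT //=.
    have yXY : y \in X :&: Y by rewrite inE yX yY.
    rewrite yXY andbT HI ?orbT //; apply/set0Pn; by exists y.
  - by move=> G /andP[GG yG]; rewrite /P GG yG orbT.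
case/orP => [/eqP eT | /andP[] //].
rewrite eT; have -> : (setT : {set T}) = G0.
  by apply/eqP; rewrite eqEsubset subsetT -eT sub.
exact: G0s.
Qed.

Lemma atom_min (Gs : {set {set T}}) y G : G \in Gs -> y \in G -> atom Gs y \subset G.
Proof. by move=> GG yG; apply: bigcap_inf; rewrite GG yG. Qed.

Lemma union_in (Gs : {set {set T}}) K :
  (forall G H, G \in Gs -> H \in Gs -> G :|: H \in Gs) -> K != set0 ->
  (forall y, y \in K -> atom Gs y \in Gs /\ y \in atom Gs y /\ atom Gs y \subset K) ->
  K \in Gs.
Proof.
move=> HU Kn0 H.
have eK : K = \bigcup_(y in K) atom Gs y.
  apply/eqP; rewrite eqEsubset; apply/andP; split.
    apply/subsetP => y yK; apply/bigcupP; exists y => //; by case: (H y yK) => _ [].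
  by apply/bigcupsP => y yK; case: (H y yK) => _ [].
pose P (X : {set T}) := (X == set0) || (X \in Gs).
have : P (\bigcup_(y in K) atom Gs y).
  apply: (big_ind P).
  - by rewrite /P eqxx.
  - move=> X Y /orP[/eqP-> | XG] /orP[/eqP-> | YG];
      rewrite /P ?set0U ?setU0 ?eqxx ?XG ?YG ?orbT //.
    by rewrite HU ?orbT.
  - by move=> y yK; case: (H y yK) => h _; rewrite /P h orbT.
by rewrite -eK /P (negbTE Kn0).
Qed.

Lemma setT_in (Gs : {set {set T}}) (w : T) : standing Gs -> [set: T] \in Gs.
Proof.
case=> HU HI HC; apply: union_in => //.
  by apply/set0Pn; exists w.
move=> y _; have [h1 h2] := atom_in HI (HC y); by rewrite h1 h2 subsetT.
Qed.

End Helpers.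
Section Mix.
Variables (T : finType) (R : realFieldType).

Lemma mixture (Gs : {set {set T}}) (p : {set T} -> {ffun T -> R}) M E q :
  standing Gs -> is_CPS Gs p -> M \in Gs ->
  (forall y, y \in M -> Pr (p (atom Gs y)) E = q) -> Pr (p M) E = q.
Proof.
case=> HU HI HC [_ hprob hone hchain] MG hq.
set mu := p M.
set m := atom Gs.
have hp : is_prob mu := hprob M MG.
have hM1 : Pr mu M = 1 := hone M MG.
have atomA y : m y \in Gs /\ y \in m y := atom_in HI (HC y).
pose d x := (x \in E)%:R * mu x - q * mu x.
pose nu (X : {set T}) := \sum_(x in X) d x.
have nuE X : nu X = Pr mu (E :&: X) - q * Pr mu X.
  rewrite /nu /d sumrB -mulr_sumr /Pr; congr (_ - _).
  rewrite (big_setID E) /= [X in _ + X]big1 ?addr0; last first.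
    by move=> x; rewrite inE => /andP[/negbTE -> _]; rewrite mul0r.
  rewrite setIC; apply: eq_bigr => x; rewrite inE => /andP[-> _]; by rewrite mul1r.
have nu_split X Y : nu X = nu (X :&: Y) + nu (X :\: Y) by rewrite /nu (big_setID Y).
have nu0 : nu set0 = 0 by rewrite /nu big_set0.
pose C y := [set y' | m y' == m y].
pose cc (X : {set T}) := forall y y', y \in X -> m y' = m y -> y' \in X.
have CC : forall n (X : {set T}), (#|X| <= n)%N -> cc X -> (forall y, y \in X -> nu (C y) = 0) -> nu X = 0.
  elim=> [|n IH] X.
    by rewrite leqn0 cards_eq0 => /eqP -> _ _; exact: nu0.
  move=> Xn ccX hX; case: (set_0Vmem X) => [->|[y yX]]; first exact: nu0.
  rewrite (nu_split X (C y)).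
  have -> : X :&: C y = C y.
    by apply/setIidPr/subsetP => y'; rewrite inE => /eqP e; exact: ccX yX e.
  rewrite hX // add0r; apply: IH.
  - rewrite -ltnS; apply: leq_trans Xn; apply: proper_card; apply/properP; split.
      exact: subsetDl.
    by exists y => //; rewrite !inE eqxx.
  - move=> a b; rewrite !inE => /andP[aC aX] e.
    by rewrite (ccX a b aX e) andbT e.
  - by move=> a; rewrite inE => /andP[_ aX]; exact: hX.
have Cz : forall n y, y \in M -> (#|m y| <= n)%N -> nu (C y) = 0.
  elim=> [|n IH] y yM.
    have [_ ym] := atomA y; rewrite leqn0 cards_eq0 => /eqP e.
    by rewrite e inE in ym.
  move=> szy; have [myG ymy] := atomA y.
  have myM : m y \subset M := atom_min MG yM.
  have numy : nu (m y) = 0.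
    rewrite nuE (hchain _ _ _ myG MG (subsetIr E (m y)) myM).
    rewrite -(Pr_restrict E (hprob _ myG) (hone _ myG)) hq //.
    by rewrite mulrC subrr.
  move: numy; rewrite (nu_split (m y) (C y)).
  have -> : m y :&: C y = C y.
    apply/setIidPr/subsetP => y'; rewrite inE => /eqP e.
    by rewrite -e; case: (atomA y').
  have -> : nu (m y :\: C y) = 0.
    apply: (CC #|m y :\: C y|) => //.
      move=> a b; rewrite !inE => /andP[aC ay] e.
      rewrite e aC /=.
      have [_ bmb] := atomA b.
      have : m a \subset m y := atom_min myG ay.
      by move/subsetP; apply; rewrite -e.
    move=> a; rewrite !inE => /andP[aC ay]; apply: IH.
      by apply: (subsetP myM).
    rewrite -ltnS; apply: leq_trans szy; apply: proper_card.
    by rewrite properEneq aC atom_min.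
  by rewrite addr0.
have : nu M = 0.
  apply: (CC #|M|) => //.
    move=> y y' yM e; have [_ y'm] := atomA y'.
    by move: y'm; rewrite e => y'm; exact: (subsetP (atom_min MG yM)).
  by move=> y yM; exact: Cz _ _ yM (leqnn _).
rewrite nuE -(Pr_restrict E hp hM1) hM1 mulr1 => /eqP.
by rewrite subr_eq0 => /eqP.
Qed.
End Mix.
Section Main.
Variables (T : finType) (R : realFieldType).
Implicit Types (GA GB : {set {set T}}) (pA pB : {set T} -> {ffun T -> R}).

Lemma AB_S GA GB pA pB E (qA qB : R) n :
  AB GA GB pA pB E qA qB n.+1 =
  ((AB GA GB pA pB E qA qB n).1 :&: Cert GA pA (AB GA GB pA pB E qA qB n).2,
   (AB GA GB pA pB E qA qB n).2 :&: Cert GB pB (AB GA GB pA pB E qA qB n).1).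
Proof. by rewrite /=; case: (AB GA GB pA pB E qA qB n). Qed.

Lemma AB_swap GA GB pA pB E (qA qB : R) n :
  AB GB GA pB pA E qB qA n =
  ((AB GA GB pA pB E qA qB n).2, (AB GA GB pA pB E qA qB n).1).
Proof. by elim: n => [//|n IH]; rewrite !AB_S IH. Qed.

Lemma propA GA GB pA pB E (qA qB : R) z u :
  standing GA -> is_CPS GA pA -> certainty_reflection GA pA -> one_closed GA pA ->
  0 <= qA <= 1 ->
  (forall n, z \in (AB GA GB pA pB E qA qB n).1) -> 0 < pA (atom GA z) u ->
  (forall n, u \in (AB GA GB pA pB E qA qB n).1) /\
  (forall n, u \in (AB GA GB pA pB E qA qB n).2).
Proof.
case=> HU HI HC [_ hprob hone _] CR OC hqA hz pu.
set mz := atom GA z; set mu := pA mz.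
have [mzG zmz] := atom_in HI (HC z).
have hp : is_prob mu := hprob _ mzG.
have h1 : Pr mu mz = 1 := hone _ mzG.
have hB : forall x n, 0 < mu x -> x \in (AB GA GB pA pB E qA qB n).2.
  move=> x n px; have := hz n.+1; rewrite AB_S inE /Cert inE => /andP[_ /eqP hc].
  exact: mem_of_Pr1 hp hc px.
pose S := [set x in mz | 0 < mu x].
have Ssub : S \subset mz by apply/subsetP => x; rewrite inE => /andP[].
have S1 : Pr mu S = 1.
  apply: (Pr_supp hp h1 Ssub).
  move=> x xm; rewrite inE xm /= -leNgt => h.
  by apply/eqP; rewrite eq_le h hp.1.
have SG : S \in GA := OC S mz mzG Ssub S1.
have uS : u \in S by rewrite inE pu andbT; exact: mem_of_Pr1 hp h1 pu.
have [muG umu] := atom_in HI (HC u).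
have muS : atom GA u \subset S := atom_min SG uS.
split; last by move=> n; exact: hB.
elim=> [|n IH].
  have := hz 0; rewrite /= inE => /eqP hq.
  have hc := CR E qA z hqA hq.
  by have := mem_of_Pr1 hp hc pu; rewrite inE.
rewrite AB_S inE IH /= /Cert inE; apply/eqP.
apply: (Pr_mono1 (hprob _ muG) (hone _ muG)).
apply: subset_trans muS _; apply/subsetP => x; rewrite inE => /andP[_ px].
exact: hB.
Qed.

Lemma propB GA GB pA pB E (qA qB : R) z u :
  standing GB -> is_CPS GB pB -> certainty_reflection GB pB -> one_closed GB pB ->
  0 <= qB <= 1 ->
  (forall n, z \in (AB GA GB pA pB E qA qB n).2) -> 0 < pB (atom GB z) u ->
  (forall n, u \in (AB GA GB pA pB E qA qB n).1) /\
  (forall n, u \in (AB GA GB pA pB E qA qB n).2).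
Proof.
move=> sB cB crB ocB hq hz pu.
have hz' : forall n, z \in (AB GB GA pB pA E qB qA n).1.
  by move=> n; rewrite AB_swap; exact: hz.
have [h1 h2] := propA sB cB crB ocB hq hz' pu.
by split=> n; [have := h2 n | have := h1 n]; rewrite AB_swap.
Qed.

Definition pb (P : Prop) : bool :=
  if excluded_middle_informative P then true else false.
Lemma pbP (P : Prop) : reflect P (pb P).
Proof. by rewrite /pb; case: excluded_middle_informative => h; constructor. Qed.

End Main.


Theorem theorem1 (T : finType) (R : realFieldType)
    (GA GB : {set {set T}}) (pA pB : {set T} -> {ffun T -> R})
    (E : {set T}) (w : T) (qA qB : R) :
  standing GA -> standing GB ->
  is_CPS GA pA -> is_CPS GB pB ->
  certainty_reflection GA pA -> certainty_reflection GB pB ->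
  one_closed GA pA -> one_closed GB pB ->
  0 <= qA <= 1 -> 0 <= qB <= 1 ->
  in_Cinf GA GB pA pB E qA qB w ->
  local_consistency GA GB pA pB w ->
  qA = qB.
Proof.
move=> sA sB cA cB crA crB ocA ocB hqA hqB hinf hlc.
have sA' := sA; have sB' := sB; have cA' := cA; have cB' := cB.
case: sA' => HUA HIA HCA; case: sB' => HUB HIB HCB.
case: cA' => _ probA oneA chainA; case: cB' => _ probB oneB chainB.
set M := meet_atom GA GB w.
have HIAB : forall G H, G \in GA :&: GB -> H \in GA :&: GB -> G :&: H != set0 ->
    G :&: H \in GA :&: GB.
  move=> G H; rewrite !inE => /andP[GA' GB'] /andP[HA HB] n0.
  by rewrite HIA ?HIB.
have [MG wM] : M \in GA :&: GB /\ w \in M.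
  apply: (atom_in HIAB); exists setT; last by rewrite inE.
  by rewrite inE (setT_in w sA) (setT_in w sB).
have MGA : M \in GA by move: MG; rewrite inE => /andP[].
have MGB : M \in GB by move: MG; rewrite inE => /andP[].
have Mmin : forall H, H \in GA -> H \in GB -> w \in H -> M \subset H.
  by move=> H HA HB wH; apply: (atom_min (Gs := GA :&: GB)); rewrite ?inE ?HA.
have lc : pA M = pB M := hlc.
set mu := pA M.
have hp : is_prob mu := probA M MGA.
have h1 : Pr mu M = 1 := oneA M MGA.
have Lw : forall u, u \in M -> u != w -> 0 < mu u.
  move=> u uM uw.
  pose L' := M :&: [set x | (x == w) || (0 < mu x)].
  have L'sub : L' \subset M := subsetIl _ _.
  have L'1 : Pr mu L' = 1.
    apply: (Pr_supp hp h1 L'sub) => x xM; rewrite !inE xM /= negb_or => /andP[_].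
    by rewrite -leNgt => h; apply/eqP; rewrite eq_le h hp.1.
  have L'A : L' \in GA := ocA L' M MGA L'sub L'1.
  have L'B : L' \in GB by apply: (ocB L' M MGB L'sub); rewrite -lc.
  have wL' : w \in L' by rewrite !inE wM eqxx.
  have := subsetP (Mmin _ L'A L'B wL') u uM.
  by rewrite !inE uM (negbTE uw).
pose InfAB y := (forall n, y \in (AB GA GB pA pB E qA qB n).1) /\
                (forall n, y \in (AB GA GB pA pB E qA qB n).2).
have winf : InfAB w by split=> n; case: (hinf n).
pose K := [set y in M | pb (InfAB y)].
have Kpr : forall y, y \in K -> y \in M /\ InfAB y.
  by move=> y; rewrite inE => /andP[-> /pbP].
have wK : w \in K by rewrite inE wM; apply/pbP.
have Kn0 : K != set0 by apply/set0Pn; exists w.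
have closeK : forall (G : {set {set T}}) (p : {set T} -> {ffun T -> R}),
    M \in G -> p M = mu ->
    (forall (E0 H F0 : {set T}), H \in G -> F0 \in G -> E0 \subset H -> H \subset F0 ->
        Pr (p F0) E0 = Pr (p F0) H * Pr (p H) E0) ->
    (forall y, atom G y \in G) -> (forall y, is_prob (p (atom G y))) ->
    (forall y u, InfAB y -> 0 < p (atom G y) u -> InfAB u) ->
    (forall y, y \in K -> atom G y \subset K).
  move=> G p MG' pM ch aG aP prop y yK; have [yM iy] := Kpr y yK.
  apply/subsetP => u umy.
  have myM : atom G y \subset M := atom_min MG' yM.
  have uM : u \in M := subsetP myM u umy.
  rewrite inE uM /=; apply/pbP.
  case: (eqVneq u w) => [->|uw]; first exact: winf.
  have pu := Lw u uM uw.
  apply: (prop y) => //.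
  have hc : Pr (p M) [set u] = Pr (p M) (atom G y) * Pr (p (atom G y)) [set u].
    by apply: ch => //; rewrite sub1set.
  move: hc; rewrite /Pr !big_set1 pM => hc.
  rewrite lt_def (aP y).1 andbT; apply/eqP => e.
  by rewrite e mulr0 in hc; rewrite hc ltxx in pu.
have atA : forall y, atom GA y \in GA /\ y \in atom GA y := fun y => atom_in HIA (HCA y).
have atB : forall y, atom GB y \in GB /\ y \in atom GB y := fun y => atom_in HIB (HCB y).
have cKA := closeK GA pA MGA erefl chainA (fun y => (atA y).1)
  (fun y => probA _ (atA y).1)
  (fun y u iy pu => propA sA cA crA ocA hqA iy.1 pu).
have cKB := closeK GB pB MGB (esym lc) chainB (fun y => (atB y).1)
  (fun y => probB _ (atB y).1)
  (fun y u iy pu => propB sB cB crB ocB hqB iy.2 pu).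
have KA : K \in GA.
  apply: union_in => // y yK; have [h2 h3] := atA y; by rewrite h2 h3 cKA.
have KB : K \in GB.
  apply: union_in => // y yK; have [h2 h3] := atB y; by rewrite h2 h3 cKB.
have MK := Mmin K KA KB wK.
have allM : forall y, y \in M -> InfAB y.
  by move=> y yM; exact: (Kpr y (subsetP MK y yM)).2.
have eA : Pr (pA M) E = qA.
  apply: mixture sA cA MGA _ => y yM; have [h _] := allM y yM.
  by have := h 0; rewrite /= inE => /eqP.
have eB : Pr (pB M) E = qB.
  apply: mixture sB cB MGB _ => y yM; have [_ h] := allM y yM.
  by have := h 0; rewrite /= inE => /eqP.
by rewrite -eA -eB lc.
Qed.
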